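(* For any integers $k_1<k_2$, the function $\cos:(k_1\pi+\pi/2,\,k_2\pi+\pi/2)\to\mathbb{R}$ is amenable.
   Context: Relative distance on $\mathbb{R}$: $\mathrm{dist}(x,y)=0$ if $x=y=0$, $\mathrm{dist}(x,y)=|\log(y/x)|$ if $xy>0$, and $\mathrm{dist}(x,y)=\infty$ otherwise. For a real analytic function $f$ on an open set $\Omega\subseteq\mathbb{R}$, not identically zero, the condition number is $\kappa(f,x)=0$ if $x=0$, $\kappa(f,x)=\infty$ if $x\neq0$ and $f(x)=0$, and $\kappa(f,x)=|x|\,|f'(x)|/|f(x)|$ otherwise; $\mu(f,x)=1+\kappa(f,x)$. $f:\Omega\to\mathbb{R}$ is amenable if there is $C>0$ such that for every $x\in\Omega$ with $\kappa(f,x)<\infty$, the set $B_x=\{y\in\mathbb{R}:\mathrm{dist}(y,x)<1/(C\mu(f,x))\}$ is contained in $\Omega$ and $\mu(f,y)\leq C\mu(f,x)$ for all $y\in B_x$. *)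

(* Defs.v *)
From Stdlib Require Import Reals.
From Coquelicot Require Import Coquelicot.
Open Scope R_scope.

Definition rel_dist (x y : R) : Rbar :=
  if Req_EM_T x 0 then
    (if Req_EM_T y 0 then Finite 0 else p_infty)
  else if Rlt_dec 0 (x * y) then Finite (Rabs (ln (y / x)))
  else p_infty.

Definition kappa (f : R -> R) (x : R) : Rbar :=
  if Req_EM_T x 0 then Finite 0
  else if Req_EM_T (f x) 0 then p_infty
  else Finite (Rabs x * Rabs (Derive f x) / Rabs (f x)).

Definition mu (f : R -> R) (x : R) : Rbar := Rbar_plus (Finite 1) (kappa f x).

Definition amenable (f : R -> R) (Omega : R -> Prop) : Prop :=
  exists C : R, 0 < C /\
    forall x : R, Omega x ->
      forall kx : R, kappa f x = Finite kx ->
        forall y : R, Rbar_lt (rel_dist y x) (Finite (1 / (C * (1 + kx)))) ->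
          Omega y /\ Rbar_le (mu f y) (Finite (C * (1 + kx))).

(* Main.v *)
Require Import Defs.
From Stdlib Require Import Reals ZArith Lra Psatz.
From Coquelicot Require Import Coquelicot.
Open Scope R_scope.

Lemma sin_bounds a : 0 <= a <= 2 -> a/3 <= sin a <= a.
Proof.
intros [H1 H2]. destruct (pre_sin_bound a 0 H1 ltac:(lra)) as [A B].
replace (sin_approx a (2*0+1)) with (a - a^3/6) in A by
  (unfold sin_approx, sin_term; simpl; field).
replace (sin_approx a (2*(0+1))) with (a - a^3/6 + a^5/120) in B by
  (unfold sin_approx, sin_term; simpl; field).
assert (0 <= a*a <= 4) by nra.
assert (0 <= a^3) by (simpl; nra).
split.
- assert (a*(4 - a*a) >= 0) by nra. nra.
- assert (a^3*(20 - a*a) >= 0) by nra. nra.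
Qed.

Lemma per z n : Rabs (cos (z + IZR n * PI)) = Rabs (cos z) /\
                Rabs (sin (z + IZR n * PI)) = Rabs (sin z).
Proof.
assert (Hs : sin (IZR n * PI) = 0) by (apply sin_eq_0_1; exists n; reflexivity).
assert (Hc : Rabs (cos (IZR n * PI)) = 1).
{ pose proof (sin2_cos2 (IZR n * PI)) as E. rewrite Hs in E. unfold Rsqr in E.
  assert (Rabs (cos (IZR n * PI)) * Rabs (cos (IZR n * PI)) = 1) by
    (rewrite <- Rabs_mult; rewrite Rabs_right; nra).
  pose proof (Rabs_pos (cos (IZR n * PI))). nra. }
rewrite cos_plus, sin_plus, Hs, !Rmult_0_r, Rminus_0_r, Rplus_0_r, !Rabs_mult, Hc.
split; ring.
Qed.

Lemma decomp x : cos x <> 0 -> exists n t, x = t + IZR n * PI /\ -(PI/2) < t < PI/2.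
Proof.
intros Hx. pose proof PI_RGT_0.
set (r := (x + PI/2)/PI).
destruct (archimed r) as [A B].
exists (up r - 1)%Z, (x - IZR (up r - 1) * PI).
rewrite minus_IZR. simpl.
assert (E : r * PI = x + PI/2) by (unfold r; field; lra).
split; [ring|].
assert (L : (IZR (up r) - 1) * PI <= r * PI) by (apply Rmult_le_compat_r; lra).
assert (U : r * PI < IZR (up r) * PI) by (apply Rmult_lt_compat_r; lra).
split; [|nra].
destruct (Rle_lt_or_eq_dec _ _ L) as [L'|L']; [nra|].
exfalso. apply Hx.
destruct (per (x - (IZR (up r) - 1) * PI) (up r - 1)) as [P _].
rewrite minus_IZR in P. simpl in P.
replace (x - (IZR (up r) - 1) * PI + (IZR (up r) - 1) * PI) with x in P by ring.
replace (x - (IZR (up r) - 1) * PI) with (-(PI/2)) in P by lra.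
rewrite cos_neg, cos_PI2, Rabs_R0 in P. apply Rabs_eq_0 in P. exact P.
Qed.

Lemma Dcos y : Derive cos y = - sin y.
Proof. apply is_derive_unique. auto_derive; auto. ring. Qed.

Lemma cos_abs_shift t : Rabs t <= PI/2 -> cos t = sin (PI/2 - Rabs t).
Proof.
intros _. rewrite sin_shift. unfold Rabs. destruct (Rcase_abs t); [rewrite cos_neg|]; reflexivity.
Qed.

Theorem mainTheorem10 (k1 k2 : Z) (Hk : (k1 < k2)%Z) :
  amenable cos
    (fun x : R => IZR k1 * PI + PI / 2 < x /\ x < IZR k2 * PI + PI / 2).
Proof.
pose proof PI_RGT_0 as Hpi. pose proof PI_4 as Hpi4.
set (a := IZR k1 * PI + PI / 2). set (b := IZR k2 * PI + PI / 2).
set (M := Rabs a + Rabs b).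
assert (HM : 0 <= M) by (unfold M; pose proof (Rabs_pos a); pose proof (Rabs_pos b); lra).
exists (24 + 24 * M). split; [lra|].
intros x Hx kx Hk' y Hy.
unfold kappa in Hk'. destruct (Req_EM_T x 0) as [x0|x0].
{ inversion Hk'; subst kx. subst x. unfold rel_dist in Hy.
  destruct (Req_EM_T y 0) as [y0|y0].
  - subst y. split; [exact Hx|]. unfold mu, kappa.
    destruct (Req_EM_T 0 0) as [_|n0]; [|congruence]. simpl. lra.
  - destruct (Rlt_dec 0 (y * 0)) as [h|h]; [rewrite Rmult_0_r in h; lra|].
    simpl in Hy. contradiction. }
destruct (Req_EM_T (cos x) 0) as [c0|c0]; [discriminate|].
rewrite Dcos, Rabs_Ropp in Hk'. injection Hk' as Hkx. symmetry in Hkx.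
destruct (decomp x c0) as (n & t & Ex & Ht).
destruct (per t n) as [Pc Ps]. rewrite <- Ex in Pc, Ps.
set (d := PI/2 - Rabs t).
assert (Hta : Rabs t < PI/2) by (apply Rabs_lt_between; lra).
assert (Hct : cos t = sin d) by (apply cos_abs_shift; lra).
assert (Hd0 : 0 < d) by (unfold d; lra).
destruct (sin_bounds d ltac:(unfold d; pose proof (Rabs_pos t); lra)) as [Sd1 Sd2].
assert (Hcpos : 0 < cos t) by lra.
rewrite (Rabs_right (cos t)) in Pc by lra.
assert (HK : kx * cos t = Rabs x * Rabs (sin t)).
{ rewrite Hkx, Pc, Ps. field. lra. }
assert (Hkx0 : 0 <= kx).
{ rewrite Hkx. apply Rmult_le_pos; [apply Rmult_le_pos; apply Rabs_pos|].
  apply Rlt_le, Rinv_0_lt_compat. apply Rabs_pos_lt. exact c0. }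
assert (Hn1 : (IZR k1 + 1) * PI <= IZR n * PI).
{ apply Rmult_le_compat_r; [lra|].
  assert (IZR k1 < IZR n).
  { apply Rmult_lt_reg_r with PI; [lra|]. unfold a in Hx. lra. }
  apply lt_IZR in H. rewrite <- plus_IZR. apply IZR_le. lia. }
assert (Hn2 : IZR n * PI <= IZR k2 * PI).
{ apply Rmult_le_compat_r; [lra|].
  assert (IZR n < IZR k2 + 1).
  { apply Rmult_lt_reg_r with PI; [lra|]. unfold b in Hx. lra. }
  rewrite <- plus_IZR in H. apply lt_IZR in H. apply IZR_le. lia. }
assert (HxM : Rabs x <= M).
{ unfold M. destruct Hx as [Hx1 Hx2]. fold a in Hx1. fold b in Hx2.
  unfold Rabs; repeat destruct Rcase_abs; lra. }
set (C := 24 + 24 * M). set (K := 1 + kx).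
assert (HCK : 24 <= C * K) by (unfold C, K; assert (0 <= M*kx) by (apply Rmult_le_pos; lra); lra).
set (r := 1 / (C * K)).
assert (HrCK : r * (C * K) = 1) by (unfold r, Rdiv; rewrite Rmult_1_l; apply Rinv_l; apply Rgt_not_eq; lra).
assert (Hr0 : 0 < r) by (unfold r; apply Rdiv_lt_0_compat; lra).
assert (Hr1 : r <= 1/24) by (assert (r*24 <= r*(C*K)) by (apply Rmult_le_compat_l; lra); lra).
assert (Key : (1/2 <= d) \/ (d < 1/2 /\ Rabs x <= 2 * kx * d)).
{ destruct (Rle_or_lt (1/2) d) as [h|h]; [left; exact h|right; split; [exact h|]].
  pose proof (sin2_cos2 t) as E. unfold Rsqr in E.
  assert (Hc2 : cos t * cos t <= 1/4).
  { assert (cos t * cos t <= cos t * (1/2)) by (apply Rmult_le_compat_l; lra). lra. }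
  assert (Hs : 1/2 <= Rabs (sin t)).
  { assert (Hss : Rabs (sin t) * Rabs (sin t) = sin t * sin t) by
      (rewrite <- Rabs_mult; apply Rabs_right; apply Rle_ge; apply Rle_0_sqr).
    pose proof (Rabs_pos (sin t)).
    destruct (Rle_or_lt (1/2) (Rabs (sin t))) as [q|q]; [exact q|].
    assert (Rabs (sin t) * Rabs (sin t) <= Rabs (sin t) * (1/2)) by (apply Rmult_le_compat_l; lra).
    lra. }
  pose proof (Rabs_pos x).
  assert (Rabs x * (1/2) <= Rabs x * Rabs (sin t)) by (apply Rmult_le_compat_l; lra).
  assert (kx * cos t <= kx * d) by (apply Rmult_le_compat_l; lra).
  lra. }
unfold rel_dist in Hy.
destruct (Req_EM_T y 0) as [y0|y0].
{ destruct (Req_EM_T x 0); [contradiction|]. simpl in Hy. contradiction. }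
destruct (Rlt_dec 0 (y * x)) as [yx|yx]; [|simpl in Hy; contradiction].
simpl in Hy. fold C K in Hy. fold r in Hy.
set (p := y / x).
assert (Hp0 : 0 < p).
{ unfold p. replace (y / x) with ((y * x) / (x * x)) by (field; auto).
  apply Rdiv_lt_0_compat; [lra|]. assert (x * x > 0) by (apply Rsqr_pos_lt; auto). lra. }
replace (x / y) with (/ p) in Hy by (unfold p; field; auto).
rewrite ln_Rinv, Rabs_Ropp in Hy by exact Hp0.
apply Rabs_lt_between in Hy.
assert (E1 : exp (- r) < p) by (rewrite <- (exp_ln p Hp0); apply exp_increasing; lra).
assert (E2 : p < exp r) by (rewrite <- (exp_ln p Hp0); apply exp_increasing; lra).
assert (E3 : exp r * exp (- r) = 1) by (rewrite <- exp_plus; replace (r + - r) with 0 by ring; apply exp_0).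
pose proof (exp_ineq1_le (- r)) as E4.
assert (E5 : exp r <= 1 + 2 * r).
{ assert (E6 : exp r * (1 - r) <= 1) by (rewrite <- E3; apply Rmult_le_compat_l; [left; apply exp_pos | lra]).
  destruct (Rle_or_lt (exp r) (1 + 2 * r)) as [q|q]; [exact q|].
  assert ((1 + 2 * r) * (1 - r) < exp r * (1 - r)) by (apply Rmult_lt_compat_r; lra).
  assert (0 <= r * (1 - 2 * r)) by (apply Rmult_le_pos; lra).
  lra. }
assert (Hyp : y = p * x) by (unfold p; field; auto).
assert (Hyx : Rabs (y - x) <= 2 * r * Rabs x).
{ replace (y - x) with ((p - 1) * x) by (rewrite Hyp; ring). rewrite Rabs_mult.
  apply Rmult_le_compat_r; [apply Rabs_pos|]. apply Rabs_le_between. lra. }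
assert (Hya : Rabs y <= 2 * Rabs x).
{ rewrite Hyp, Rabs_mult, (Rabs_right p) by lra. pose proof (Rabs_pos x).
  apply Rmult_le_compat_r; lra. }
assert (HA : Rabs (y - x) <= d / 2).
{ assert (4 * Rabs x <= d * (C * K)).
  { assert (HC24 : 24 <= C) by (unfold C; lra).
    assert (HK1 : 1 <= K) by (unfold K; lra).
    destruct Key as [h|[h1 h2]].
    - assert (0 <= C * (K - 1)) by (apply Rmult_le_pos; lra).
      assert (1/2 * (C * K) <= d * (C * K)) by (apply Rmult_le_compat_r; lra).
      unfold C in *. lra.
    - assert (0 <= d * kx) by (apply Rmult_le_pos; lra).
      assert (EdK : d * K = d + d * kx) by (unfold K; ring).
      assert (24 * (d * K) <= C * (d * K)) by (apply Rmult_le_compat_r; lra).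
      assert (d * (C * K) = C * (d * K)) by ring.
      lra. }
  pose proof (Rabs_pos x).
  assert (4 * Rabs x * r <= d * (C * K) * r) by (apply Rmult_le_compat_r; lra).
  assert (d * (C * K) * r = d) by (transitivity (d * (r * (C * K))); [ring | rewrite HrCK; ring]).
  lra. }
set (s := y - IZR n * PI).
assert (Hst : -(d/2) <= s - t <= d/2).
{ apply Rabs_le_between. replace (s - t) with (y - x) by (unfold s; rewrite Ex; ring). exact HA. }
assert (Htb : -(PI/2 - d) <= t <= PI/2 - d).
{ unfold d. unfold Rabs; destruct Rcase_abs; lra. }
assert (Hsb : Rabs s <= PI/2 - d/2) by (apply Rabs_le_between; lra).
set (e := PI/2 - Rabs s).
assert (Hcs : cos s = sin e) by (apply cos_abs_shift; lra).
destruct (sin_bounds e ltac:(unfold e; pose proof (Rabs_pos s); lra)) as [Se1 Se2].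
assert (Hys : y = s + IZR n * PI) by (unfold s; ring).
destruct (per s n) as [Qc Qs]. rewrite <- Hys in Qc, Qs.
assert (Hcs0 : d / 6 <= cos s) by (unfold e in *; lra).
rewrite (Rabs_right (cos s)) in Qc by lra.
split.
{ assert (Rabs s < PI/2) by lra. apply Rabs_lt_between in H.
  unfold a, b in *. split; lra. }
unfold mu, kappa.
destruct (Req_EM_T y 0) as [h|_]; [contradiction|].
destruct (Req_EM_T (cos y) 0) as [h|_].
{ rewrite h, Rabs_R0 in Qc. lra. }
simpl. rewrite Dcos, Rabs_Ropp, Qc, Qs. fold C K.
set (Q := Rabs y * Rabs (sin s) / cos s).
assert (HQ : Q * cos s = Rabs y * Rabs (sin s)) by (unfold Q; field; lra).
assert (HQ0 : 0 <= Q).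
{ unfold Q. apply Rmult_le_pos; [apply Rmult_le_pos; apply Rabs_pos|].
  apply Rlt_le, Rinv_0_lt_compat. lra. }
assert (Hsin1 : Rabs (sin s) <= 1) by (apply Rabs_le_between; apply SIN_bound).
assert (HQd : Q * d <= 12 * Rabs x).
{ pose proof (Rabs_pos y). pose proof (Rabs_pos (sin s)).
  assert (Q * (d/6) <= Q * cos s) by (apply Rmult_le_compat_l; lra).
  assert (Rabs y * Rabs (sin s) <= Rabs y * 1) by (apply Rmult_le_compat_l; lra).
  lra. }
assert (HC24 : 24 <= C) by (unfold C; lra).
assert (HK1 : 1 <= K) by (unfold K; lra).
assert (24 * K <= C * K) by (apply Rmult_le_compat_r; lra).
destruct Key as [h|[h1 h2]].
- assert (0 <= C * (K - 1)) by (apply Rmult_le_pos; lra).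
  assert (Q * (1/2) <= Q * d) by (apply Rmult_le_compat_l; lra).
  unfold C in *. lra.
- assert (Q * d <= (24 * kx) * d) by lra.
  assert (Q <= 24 * kx).
  { destruct (Rle_or_lt Q (24 * kx)) as [q|q]; [exact q|].
    assert (24 * kx * d < Q * d) by (apply Rmult_lt_compat_r; lra). lra. }
  unfold K in *. lra.
Qed.
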